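(* In the setting below, every coding scheme satisfies $\mathcal{L}_{\text{total}}\ge\mathcal{L}_{\text{total,lb}}:=\sum_{i\in\{3,4\}}\sum_{j=2Z+1}^{n}\mu^{(i)}_j$ (an empty sum being $0$).
   Context: Let $n,a,b,Z$ be positive integers with $\max\{a,b\}\le n\le a+b$ and $Z\le n$. Let $x=(x_1,\dots,x_n)^\top$ be a real random vector with $\mathbb{E}[x]=0$ and positive definite covariance $\Psi=\mathbb{E}[xx^\top]$, with Cholesky decomposition $\Psi=LL^\top$ ($L$ lower triangular with positive diagonal). Let $x^{(1)}=(x_1,\dots,x_a)^\top$, $x^{(2)}=(x_{n-b+1},\dots,x_n)^\top$. A coding scheme consists of matrices $E^{(1,3)},E^{(1,5)}\in\mathbb{R}^{Z\times a}$, $E^{(2,4)},E^{(2,5)}\in\mathbb{R}^{Z\times b}$, $E^{(5,6)}\in\mathbb{R}^{Z\times 2Z}$, $D^{(3)},D^{(4)}\in\mathbb{R}^{n\times 2Z}$; set $\phi^{(1,3)}=E^{(1,3)}x^{(1)}$, $\phi^{(1,5)}=E^{(1,5)}x^{(1)}$, $\phi^{(2,4)}=E^{(2,4)}x^{(2)}$, $\phi^{(2,5)}=E^{(2,5)}x^{(2)}$, $\phi^{(5,6)}=E^{(5,6)}\begin{bmatrix}\phi^{(1,5)}\\ \phi^{(2,5)}\end{bmatrix}$, $\hat x^{(3)}=D^{(3)}\begin{bmatrix}\phi^{(1,3)}\\ \phi^{(5,6)}\end{bmatrix}$, $\hat x^{(4)}=D^{(4)}\begin{bmatrix}\phi^{(2,4)}\\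 \phi^{(5,6)}\end{bmatrix}$. For task matrices $K^{(3)}\in\mathbb{R}^{m_3\times n}$, $K^{(4)}\in\mathbb{R}^{m_4\times n}$ the overall task loss is $\mathcal{L}_{\text{total}}=\sum_{i\in\{3,4\}}\mathbb{E}\|K^{(i)}x-K^{(i)}\hat x^{(i)}\|_2^2$. For $i\in\{3,4\}$ let $S^{(i)}=L^\top K^{(i)\top}K^{(i)}L$ with eigenvalues $\mu^{(i)}_1\ge\mu^{(i)}_2\ge\dots\ge\mu^{(i)}_n$. *)

(* Defs.v *)
From HB Require Import structures.
From mathcomp Require Import all_boot all_order all_algebra.
From mathcomp Require Import all_classical all_reals all_analysis.
Set Implicit Arguments. Unset Strict Implicit. Unset Printing Implicit Defensive.
Import Order.TTheory GRing.Theory Num.Theory.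
Local Open Scope ring_scope.

Definition first_block (R : pzRingType) (a n : nat) : 'M[R]_(a, n) :=
  \matrix_(i < a, j < n) ((j : nat) == i)%:R.

(* Selection of the last b coordinates: x^(2) = (x_{n-b+1},...,x_n)
   (0-based: indices n-b, ..., n-1). *)
Definition last_block (R : pzRingType) (b n : nat) : 'M[R]_(b, n) :=
  \matrix_(i < b, j < n) ((j : nat) == (n - b + i)%N)%:R.

Definition sorted_eigenvalues (R : realFieldType) (n : nat)
    (S : 'M[R]_n) (mu : seq R) : Prop :=
  [/\ size mu = n, sorted (fun x y => y <= x) mu &
      char_poly S = \prod_(m <- mu) ('X - m%:P)].

Definition posdef (R : realFieldType) (n : nat) (A : 'M[R]_n) : Prop :=
  A^T = A /\ forall v : 'cV[R]_n, v != 0 -> 0 < (v^T *m A *m v) 0 0.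

Definition cholesky (R : realFieldType) (n : nat) (A L : 'M[R]_n) : Prop :=
  [/\ forall i j : 'I_n, (i < j)%N -> L i j = 0,
      forall i : 'I_n, 0 < L i i & A = L *m L^T].

Definition sqnorm (R : pzRingType) (m : nat) (v : 'cV[R]_m) : R :=
  \sum_(k < m) v k 0 ^+ 2.

(* Main.v *)
Require Import Defs.
From HB Require Import structures.
From mathcomp Require Import all_boot all_order all_algebra.
From mathcomp Require Import all_classical all_reals all_analysis.
From mathcomp Require Import complex fingroup perm zify ring lra.
Import Order.TTheory GRing.Theory Num.Theory.
Local Open Scope ring_scope.
Set Implicit Arguments. Unset Strict Implicit. Unset Printing Implicit Defensive.

Module LinAlg.
Local Open Scope sesquilinear_scope.
Section Comb.
Variable R : numDomainType.

Lemma sum_tail_ind p n (F : nat -> R) :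
  \sum_(p <= j < n) F j = \sum_(0 <= j < n) (p <= j)%N%:R * F j.
Proof.
have [pn|np] := leqP p n.
  rewrite (@big_cat_nat _ _ _ p 0 n) //=.
  rewrite [X in _ = X + _]big1_seq ?add0r; last first.
    move=> j /andP[_]; rewrite mem_index_iota => /andP[_ jp].
    by rewrite leqNgt jp mul0r.
  apply: eq_big_seq => j; rewrite mem_index_iota => /andP[pj _].
  by rewrite pj mul1r.
rewrite big_geq ?(ltnW np) //; rewrite big1_seq // => j /andP[_].
rewrite mem_index_iota => /andP[_ jn].
by rewrite leqNgt (ltn_trans jn np) mul0r.
Qed.

Lemma comb n p (mu : seq R) (w : nat -> R) :
  size mu = n -> sorted (fun x y => y <= x) mu ->
  (forall j, (j < n)%N -> 0 <= mu`_j) ->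
  (forall j, (j < n)%N -> 0 <= w j <= 1) ->
  (n - p)%:R <= \sum_(0 <= j < n) w j ->
  \sum_(p <= j < n) mu`_j <= \sum_(0 <= j < n) mu`_j * w j.
Proof.
move=> sz so mu0 w01 sw.
have mono : forall i j, (i <= j)%N -> (j < n)%N -> mu`_j <= mu`_i.
  move=> i j ij jn.
  have := @sorted_leq_nth _ (fun x y => y <= x) (fun a b c h1 h2 => le_trans h2 h1)
     (fun x => lexx x) 0 mu so i j.
  rewrite !inE sz => H; apply: H => //; exact: leq_ltn_trans jn.
pose c := if (p < n)%N then mu`_p else 0.
have c0 : 0 <= c by rewrite /c; case: ifP => // pn; apply: mu0.
have key : forall j, (j < n)%N ->
    c * w j - (p <= j)%N%:R * c <= mu`_j * w j - (p <= j)%N%:R * mu`_j.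
  move=> j jn; have /andP[w0 w1] := w01 j jn.
  case: (leqP p j) => pj.
    have pn : (p < n)%N by exact: leq_ltn_trans jn.
    have cmu : mu`_j <= c by rewrite /c pn; apply: mono.
    rewrite !mul1r -[c * w j - c]opprB -[mu`_j * w j - mu`_j]opprB lerN2.
    rewrite -[X in X - _ <= _]mulr1 -mulrBr -[X in _ <= X - _]mulr1 -mulrBr.
    by apply: ler_wpM2r; rewrite ?subr_ge0.
  rewrite !mul0r !subr0; apply: ler_wpM2r => //.
  rewrite /c; case: ifP => pn; first by apply: mono => //; exact: ltnW.
  exact: mu0.
rewrite sum_tail_ind.
rewrite -subr_ge0 -sumrB.
have H1 : \sum_(0 <= j < n) (c * w j - (p <= j)%N%:R * c) <=
    \sum_(0 <= j < n) (mu`_j * w j - (p <= j)%N%:R * mu`_j).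
  by apply: ler_sum_nat => j /andP[_ jn]; exact: key.
apply: le_trans H1.
have cnt : \sum_(0 <= j < n) (p <= j)%N%:R = (n - p)%:R :> R.
  have := sum_tail_ind p n (fun _ => 1).
  rewrite sumr_const_nat => H; rewrite [RHS]H.
  by apply: eq_bigr => j _; rewrite mulr1.
rewrite sumrB -mulr_sumr -mulr_suml cnt mulrC -mulrBl.
by apply: mulr_ge0 => //; rewrite subr_ge0.
Qed.
End Comb.

Section LA.
Variable C : numClosedFieldType.

Lemma ctM m n p (A : 'M[C]_(m, n)) (B : 'M[C]_(n, p)) :
  (A *m B)^t* = B^t* *m A^t*.
Proof. by rewrite trmx_mul map_mxM. Qed.

Lemma ctB m n (A B : 'M[C]_(m, n)) : (A - B)^t* = A^t* - B^t*.
Proof. by rewrite linearB /= map_mxB. Qed.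

Lemma ct1 n : (1%:M : 'M[C]_n)^t* = 1%:M.
Proof. by rewrite trmx1 map_mx1. Qed.

Definition fro m n (Y : 'M[C]_(m, n)) := \tr (Y *m Y^t*).

Lemma froE m n (Y : 'M[C]_(m, n)) :
  fro Y = \sum_i \sum_j Y i j * (Y i j)^*.
Proof.
by rewrite /fro /mxtrace; apply: eq_bigr => i _; rewrite mxE; apply: eq_bigr => j _; rewrite !mxE.
Qed.

Lemma fro_ge0 m n (Y : 'M[C]_(m, n)) : 0 <= fro Y.
Proof. by rewrite froE; apply: sumr_ge0 => i _; apply: sumr_ge0 => j _; apply: mul_conjC_ge0. Qed.

Lemma fro_eq0 m n (Y : 'M[C]_(m, n)) : fro Y = 0 -> Y = 0.
Proof.
rewrite froE => H0; apply/matrixP => i j; rewrite mxE.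
have Hi : \sum_j Y i j * (Y i j)^* = 0.
  by apply: (psumr_eq0P _ H0) => // k _; apply: sumr_ge0 => l _; apply: mul_conjC_ge0.
have : Y i j * (Y i j)^* = 0.
  by apply: (psumr_eq0P _ Hi) => // k _; apply: mul_conjC_ge0.
by move/eqP; rewrite mul_conjC_eq0 => /eqP.
Qed.

Lemma char_poly_sim n (A Pi P : 'M[C]_n) : Pi *m P = 1%:M ->
  char_poly (Pi *m A *m P) = char_poly A.
Proof.
move=> PiP; rewrite /char_poly /char_poly_mx.
have -> : 'X%:M - map_mx polyC (Pi *m A *m P) =
    map_mx polyC Pi *m ('X%:M - map_mx polyC A) *m map_mx polyC P.
  rewrite mulmxBr mulmxBl -!map_mxM; congr (_ - _).
  by rewrite scalar_mxC -mulmxA -map_mxM PiP map_mx1 mulmx1.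
rewrite !det_mulmx mulrAC -det_mulmx -map_mxM PiP map_mx1 det1.
by rewrite mul1r.
Qed.

Lemma spec_herm n (A : 'M[C]_n) : A^t* = A ->
  exists P : 'M[C]_n, exists d : 'rV[C]_n,
    [/\ P *m P^t* = 1%:M, P^t* *m P = 1%:M & A = P^t* *m diag_mx d *m P].
Proof.
move=> Ah.
have An : A \is normalmx by apply/normalmxP; rewrite Ah.
have PU := spectral_unitarymx A.
exists (spectralmx A), (spectral_diag A); split.
- exact/unitarymxP.
- by rewrite -invmx_unitary // mulVmx // spectral_unit.
- by rewrite -invmx_unitary //; apply/orthomx_spectralP.
Qed.

Lemma rank_diag n (d : 'rV[C]_n) : \rank (diag_mx d) = (\sum_i nat_of_bool (d ord0 i != 0%R))%N.
Proof.
elim: n d => [|n IH] d.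
  by rewrite big_ord0; apply/eqP; rewrite -leqn0 rank_leq_row.
have E := diag_mx_row (lsubmx (d : 'M[C]_(1, 1 + n))) (rsubmx (d : 'M[C]_(1, 1 + n))).
rewrite hsubmxK in E.
change (\rank (diag_mx (d : 'M[C]_(1, 1 + n))) = (\sum_i nat_of_bool (d ord0 i != 0%R))%N).
rewrite E rank_diag_block_mx IH big_ord_recl.
congr (_ + _)%N.
  have -> : lsubmx (d : 'M[C]_(1, 1 + n)) = (d ord0 ord0)%:M.
    apply/matrixP => i j; rewrite !ord1 !mxE /= mulr1n.
    by congr (d _ _); apply: val_inj.
  have [->|d0] := eqVneq (d 0 0) 0.
    rewrite (_ : diag_mx _ = 0) ?mxrank0 //.
    by apply/matrixP => i j; rewrite !ord1 !mxE.
  rewrite (_ : diag_mx _ = (d ord0 ord0)%:M).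
    by rewrite -scalemx1 mxrank_scale_nz // mxrank1.
  by apply/matrixP => i j; rewrite !ord1 !mxE.
apply: eq_bigr => i _.
rewrite mxE; congr (nat_of_bool (d _ _ != 0)); exact: val_inj.
Qed.

Lemma ctK m n (A : 'M[C]_(m, n)) : A^t*^t* = A.
Proof. exact: trmxCK. Qed.

Lemma ct_diag n (d : 'rV[C]_n) : (forall i, (d 0 i)^* = d 0 i) ->
  (diag_mx d)^t* = diag_mx d.
Proof.
move=> dr; rewrite tr_diag_mx map_diag_mx; congr diag_mx.
by apply/matrixP => i j; rewrite !ord1 mxE; apply: dr.
Qed.

Lemma YYct_ii m n (Y : 'M[C]_(m, n)) i :
  (Y *m Y^t*) i i = \sum_j Y i j * (Y i j)^*.
Proof. by rewrite mxE; apply: eq_bigr => j _; rewrite !mxE. Qed.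

Lemma YYct_ii_ge0 m n (Y : 'M[C]_(m, n)) i : 0 <= (Y *m Y^t*) i i.
Proof. by rewrite YYct_ii; apply: sumr_ge0 => j _; apply: mul_conjC_ge0. Qed.

Lemma fro_proj m n (Y : 'M[C]_(m, n)) (Q : 'M[C]_n) :
  Q^t* = Q -> Q *m Q = Q -> fro (Y *m Q) <= fro Y.
Proof.
move=> Qh QQ.
have E1 : fro (Y *m Q) = \tr (Y *m Q *m Y^t*).
  by rewrite /fro ctM Qh mulmxA -(mulmxA Y) QQ.
have E2 : fro (Y *m (1%:M - Q)) = fro Y - fro (Y *m Q).
  rewrite E1 /fro ctM ctB ct1 Qh.
  have -> : Y *m (1%:M - Q) *m ((1%:M - Q) *m Y^t*) = Y *m (1%:M - Q) *m Y^t*.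
    rewrite mulmxA -(mulmxA Y); congr (_ *m _ *m _).
    by rewrite mulmxBl mul1mx mulmxBr mulmx1 QQ subrr subr0.
  by rewrite mulmxBr mulmx1 mulmxBl linearB.
by rewrite -subr_ge0 -E2 fro_ge0.
Qed.

Lemma partB_C m n p (M : 'M[C]_(m, n)) (N : 'M[C]_(p, n)) (X : 'M[C]_(m, p))
    (mu : seq C) :
  size mu = n -> sorted (fun x y => y <= x) mu ->
  char_poly (M^t* *m M) = \prod_(x <- mu) ('X - x%:P) ->
  \sum_(p <= j < n) mu`_j <= fro (M - X *m N).
Proof.
move=> szmu somu chG.
set G := M^t* *m M.
have Gh : G^t* = G by rewrite /G ctM ctK.
set H := N^t* *m N.
have Hh : H^t* = H by rewrite /H ctM ctK.
have [PH [h [PH1 PH2 HE]]] := spec_herm Hh.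
pose e := \row_i ((h 0 i == 0)%:R : C).
pose Q := PH^t* *m diag_mx e *m PH.
have er : forall i, (e 0 i)^* = e 0 i by move=> i; rewrite mxE conjC_nat.
have Qh : Q^t* = Q by rewrite /Q !ctM ctK ct_diag // mulmxA.
have QQ : Q *m Q = Q.
  rewrite /Q -!mulmxA (mulmxA PH) PH1 mul1mx (mulmxA (diag_mx e)) mulmx_diag.
  congr (_ *m (diag_mx _ *m _)); apply/matrixP => i j; rewrite !mxE.
  by case: (h 0 j == 0); rewrite ?mulr1 ?mulr0.
have HQ : H *m Q = 0.
  rewrite HE /Q -!mulmxA (mulmxA PH) PH1 mul1mx (mulmxA (diag_mx h)) mulmx_diag.
  rewrite (_ : diag_mx _ = 0) ?mul0mx ?mulmx0 //.
  apply/matrixP => i j; rewrite !mxE.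
  by case: eqP => [->|]; rewrite ?mul0r ?mulr0 ?mul0rn.
have trQ : \tr Q = \sum_i e 0 i.
  by rewrite /Q mxtrace_mulC mulmxA PH1 mul1mx mxtrace_diag.
clearbody Q.
have NQ : N *m Q = 0.
  apply: fro_eq0.
  rewrite /fro ctM Qh mulmxA -(mulmxA N) QQ mxtrace_mulC mulmxA.
  by rewrite -/H HQ mxtrace0.
have step1 : fro (M *m Q) <= fro (M - X *m N).
  have <- : (M - X *m N) *m Q = M *m Q by rewrite mulmxBl -mulmxA NQ mulmx0 subr0.
  exact: fro_proj.
apply: le_trans step1.
have [P [d [P1 P2 GE]]] := spec_herm Gh.
pose W := P *m Q *m P^t*.
have froMQ : fro (M *m Q) = \sum_i d 0 i * W i i.
  rewrite /fro ctM Qh mulmxA -(mulmxA M) QQ mxtrace_mulC mulmxA -/G GE.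
  rewrite -!mulmxA mxtrace_mulC -mulmxA -/W.
  by rewrite mul_diag_mx /mxtrace; apply: eq_bigr => i _; rewrite mxE.
have trW : \tr W = \tr Q.
  by rewrite /W mxtrace_mulC mulmxA P2 mul1mx.
have Wh : W^t* = W by rewrite /W ctM ctM ctK Qh mulmxA.
have WW : W *m W = W.
  by rewrite /W -!mulmxA (mulmxA (P^t*)) P2 mul1mx (mulmxA Q) QQ.
clearbody W.
have wE : forall i, W i i = \sum_j W i j * (W i j)^*.
  by move=> i; rewrite -YYct_ii Wh WW.
have w0 : forall i, 0 <= W i i.
  by move=> i; rewrite wE; apply: sumr_ge0 => j _; apply: mul_conjC_ge0.
have w1 : forall i, W i i <= 1.
  move=> i; have := w0 i; rewrite le0r => /orP[/eqP->|wpos] //.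
  have : W i i * W i i <= W i i * 1.
    rewrite mulr1 {3}wE (bigD1 i) //= -{1}(geC0_conj (w0 i)) mulrC lerDl.
    by apply: sumr_ge0 => j _; apply: mul_conjC_ge0.
  by rewrite ler_pM2l.
have d0 : forall i, 0 <= d 0 i.
  move=> i.
  have DE : diag_mx d = P *m G *m P^t*.
    by rewrite GE !mulmxA P1 mul1mx -mulmxA P1 mulmx1.
  have DE2 : P *m G *m P^t* = (P *m M^t*) *m (P *m M^t*)^t*.
    by rewrite ctM ctK /G !mulmxA.
  have := YYct_ii_ge0 (P *m M^t*) i.
  by rewrite -DE2 -DE mxE eqxx mulr1n.
have cnt : (n - p)%:R <= \sum_i e 0 i.
  have rk : (\sum_i nat_of_bool (h ord0 i != 0%R) <= p)%N.
    rewrite -rank_diag.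
    have -> : diag_mx h = PH *m H *m PH^t*.
      by rewrite HE !mulmxA PH1 mul1mx -mulmxA PH1 mulmx1.
    apply: leq_trans (mxrankM_maxl _ _) _.
    apply: leq_trans (mxrankM_maxr _ _) _.
    rewrite /H; apply: leq_trans (mxrankM_maxr _ _) _.
    exact: rank_leq_row.
  have se : \sum_i e 0 i = (\sum_i nat_of_bool (h ord0 i == 0%R))%:R.
    by rewrite natr_sum; apply: eq_bigr => i _; rewrite mxE.
  have tot : (\sum_i nat_of_bool (h ord0 i == 0%R) + \sum_i nat_of_bool (h ord0 i != 0%R))%N = n.
    rewrite -big_split /=.
    rewrite (eq_bigr (fun _ => 1%N)); last by move=> i _; case: (h ord0 i == 0%R).
    by rewrite sum1_card card_ord.
  rewrite se ler_nat; lia.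
have chD : char_poly (diag_mx d) = \prod_(x <- mu) ('X - x%:P).
  by rewrite -chG -/G GE char_poly_sim.
rewrite char_poly_trig ?diag_mx_is_trig // in chD.
have pe : perm_eq mu [tuple d 0 i | i < n].
  apply: prod_XsubC_eq; rewrite -chD big_tuple.
  by apply: eq_bigr => i _; rewrite tnth_mktuple mxE eqxx mulr1n.
have [s sE] := tuple_permP pe.
have muE : forall j : 'I_n, mu`_j = d 0 (s j).
  by move=> j; rewrite sE -tnth_nth !tnth_mktuple.
pose w := fun j : nat => if @insub _ (fun k => (k < n)%N) 'I_n j is Some k then W (s k) (s k) else 0.
have wsE : forall j : 'I_n, w j = W (s j) (s j).
  by move=> j; rewrite /w valK.
have mu0 : forall j, (j < n)%N -> 0 <= mu`_j.
  by move=> j jn; have := muE (Ordinal jn); rewrite /= => ->.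
have w01 : forall j, (j < n)%N -> 0 <= w j <= 1.
  move=> j jn; have -> : w j = W (s (Ordinal jn)) (s (Ordinal jn)) by apply: (wsE (Ordinal jn)).
  by rewrite w0 w1.
have sw : (n - p)%:R <= \sum_(0 <= j < n) w j.
  apply: le_trans cnt _; rewrite -trQ -trW big_mkord.
  rewrite (eq_bigr (fun j => W (s j) (s j))); last by move=> j _; rewrite wsE.
  by rewrite /mxtrace (reindex_inj (@perm_inj _ s)).
apply: le_trans (comb szmu somu mu0 w01 sw) _.
rewrite froMQ big_mkord [in X in _ <= X](reindex_inj (@perm_inj _ s)) /=.
rewrite le_eqVlt; apply/orP; left; apply/eqP.
by apply: eq_bigr => j _; rewrite muE wsE.
Qed.

End LA.

Lemma partB_R (R : rcfType) m n p (M : 'M[R]_(m, n)) (N : 'M[R]_(p, n))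
    (X : 'M[R]_(m, p)) (mu : seq R) :
  size mu = n -> sorted (fun x y => y <= x) mu ->
  char_poly (M^T *m M) = \prod_(m <- mu) ('X - m%:P) ->
  \sum_(p <= j < n) mu`_j <= \sum_i \sum_j (M - X *m N) i j ^+ 2.
Proof.
move=> sz so ch.
pose f := real_complex R.
have fc : forall x : R, Num.conj_op (f x) = f x by move=> x; apply: conjc_real.
have ctf : forall m' n' (A : 'M[R]_(m', n')), (map_mx f A)^t* = map_mx f A^T.
  by move=> m' n' A; apply/matrixP => i j; rewrite !mxE fc.
have H := @partB_C (R[i]) m n p (map_mx f M) (map_mx f N) (map_mx f X) (map f mu).
have szC : size (map f mu) = n by rewrite size_map.
have soC : sorted (fun x y => y <= x) (map f mu).
  by rewrite sorted_map; apply: sub_sorted so => x y /=; rewrite lecR.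
have chC : char_poly ((map_mx f M)^t* *m map_mx f M) = \prod_(x <- map f mu) ('X - x%:P).
  rewrite ctf -map_mxM -map_char_poly ch rmorph_prod big_map.
  by apply: eq_bigr => x _; exact: map_polyXsubC.
have := H szC soC chC.
have -> : \sum_(p <= j < n) (map f mu)`_j = real_complex R (\sum_(p <= j < n) mu`_j).
  rewrite rmorph_sum; apply: eq_big_nat => j /andP[_ jn].
  by rewrite (nth_map 0) // sz.
have -> : fro (map_mx f M - map_mx f X *m map_mx f N) =
    real_complex R (\sum_i \sum_j (M - X *m N) i j ^+ 2).
  rewrite -map_mxM -map_mxB froE rmorph_sum; apply: eq_bigr => i _.
  rewrite rmorph_sum; apply: eq_bigr => j _.
  by rewrite mxE fc rmorphXn expr2.
by rewrite lecR.
Qed.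

End LinAlg.

Section PA.
Variables (R : realType) (d : measure_display) (T : measurableType d)
  (P : probability T R).

Lemma int_sum (I : finType) (f : I -> T -> R) :
  (forall i, P.-integrable setT (fun t => (f i t)%:E)) ->
  P.-integrable setT (fun t => (\sum_i f i t)%:E) /\
  (\int[P]_t (\sum_i f i t)%:E = \sum_i \int[P]_t (f i t)%:E)%E.
Proof.
move=> fi; split.
  apply: (eq_integrable _ _ _ _ (integrable_sum _ (index_enum I) (fun i _ => fi i))) => //.
  by move=> t _; rewrite sumEFin.
under eq_integral do rewrite -sumEFin.
exact: (integral_sum _ fi).
Qed.

Lemma int_prod n (x : T -> 'cV[R]_n) :
  (forall i, measurable_fun setT (fun t => x t i 0)) ->
  (forall i, P.-integrable setT (fun t => (x t i 0 ^+ 2)%:E)) ->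
  forall i j, P.-integrable setT (fun t => (x t i 0 * x t j 0)%:E).
Proof.
move=> mx ix2 i j.
have ig : P.-integrable setT (fun t => (x t i 0 ^+ 2 + x t j 0 ^+ 2)%:E).
  by apply: (eq_integrable _ _ _ _ (integrableD _ (ix2 i) (ix2 j))) => // t _.
apply: (le_integrable _ _ _ ig) => //.
  by apply/measurable_realfun.measurable_EFinP; apply: measurable_realfun.measurable_funM.
move=> t _; rewrite !abse_EFin lee_fin.
set u := x t i 0; set v := x t j 0.
have h0 : 0 <= u ^+ 2 + v ^+ 2 by rewrite addr_ge0 // sqr_ge0.
rewrite [X in _ <= X]ger0_norm // normrM.
have := sqr_ge0 (`|u| - `|v|).
rewrite sqrrB !real_normK ?num_real // => h1.
have h2 : 0 <= `|u| * `|v| by rewrite mulr_ge0.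
lra.
Qed.

Lemma expect_sq n m (x : T -> 'cV[R]_n) (Psi : 'M[R]_n) (B : 'M[R]_(m, n)) :
  (forall i, measurable_fun setT (fun t => x t i 0)) ->
  (forall i, P.-integrable setT (fun t => (x t i 0 ^+ 2)%:E)) ->
  (forall i j, (\int[P]_t (x t i 0 * x t j 0)%:E = (Psi i j)%:E)%E) ->
  (\int[P]_t (sqnorm (B *m x t))%:E =
     (\sum_k \sum_i \sum_j B k i * B k j * Psi i j)%:E)%E.
Proof.
move=> mx ix2 hPsi.
have ixx := int_prod mx ix2.
have eqf : forall t, sqnorm (B *m x t) =
    \sum_k \sum_i \sum_j (B k i * B k j) * (x t i 0 * x t j 0).
  move=> t; rewrite /sqnorm; apply: eq_bigr => k _.
  rewrite mxE expr2 mulr_suml; apply: eq_bigr => i _.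
  rewrite mulr_sumr; apply: eq_bigr => j _.
  by rewrite mulrACA.
under eq_integral do rewrite eqf.
have H3 : forall k i j, P.-integrable setT
    (fun t => ((B k i * B k j) * (x t i 0 * x t j 0))%:E) /\
    (\int[P]_t ((B k i * B k j) * (x t i 0 * x t j 0))%:E =
       (B k i * B k j * Psi i j)%:E)%E.
  move=> k i j; split.
    by apply: (eq_integrable _ _ _ _ (integrableZl _ (B k i * B k j) (ixx i j))).
  under eq_integral do rewrite EFinM.
  rewrite (integralZl _ (ixx i j)) //.
  have -> : (B k i * B k j * Psi i j)%:E = ((B k i * B k j)%:E * (Psi i j)%:E)%E by [].
  congr (_ * _)%E; exact: hPsi.
have H2 : forall k i, P.-integrable setT
    (fun t => (\sum_j (B k i * B k j) * (x t i 0 * x t j 0))%:E) /\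
    (\int[P]_t (\sum_j (B k i * B k j) * (x t i 0 * x t j 0))%:E =
       (\sum_j B k i * B k j * Psi i j)%:E)%E.
  move=> k i; have [I1 I2] := int_sum (f := fun j t => (B k i * B k j) * (x t i 0 * x t j 0))
     (fun j => (H3 k i j).1).
  split => //; rewrite I2 -sumEFin; apply: eq_bigr => j _; exact: (H3 k i j).2.
have H1 : forall k, P.-integrable setT
    (fun t => (\sum_i \sum_j (B k i * B k j) * (x t i 0 * x t j 0))%:E) /\
    (\int[P]_t (\sum_i \sum_j (B k i * B k j) * (x t i 0 * x t j 0))%:E =
       (\sum_i \sum_j B k i * B k j * Psi i j)%:E)%E.
  move=> k; have [I1 I2] := int_sum (f := fun i t => \sum_j (B k i * B k j) * (x t i 0 * x t j 0))
     (fun i => (H2 k i).1).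
  split => //; rewrite I2 -sumEFin; apply: eq_bigr => i _; exact: (H2 k i).2.
have [J1 J2] := int_sum (f := fun k t => \sum_i \sum_j (B k i * B k j) * (x t i 0 * x t j 0))
     (fun k => (H1 k).1).
rewrite J2 -sumEFin; apply: eq_bigr => k _; exact: (H1 k).2.
Qed.

End PA.

Lemma quad (R : realType) m n (B : 'M[R]_(m, n)) (L : 'M[R]_n) :
  \sum_k \sum_i \sum_j B k i * B k j * (L *m L^T) i j =
  \sum_k \sum_l (B *m L) k l ^+ 2.
Proof.
apply: eq_bigr => k _.
have E1 : forall l, (B *m L) k l ^+ 2 =
    \sum_i \sum_j B k i * B k j * (L i l * L j l).
  move=> l; rewrite !mxE expr2 mulr_suml; apply: eq_bigr => i _.
  rewrite mulr_sumr; apply: eq_bigr => j _; ring.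
rewrite (eq_bigr _ (fun l _ => E1 l)) [RHS]exchange_big /=; apply: eq_bigr => i _.
rewrite [RHS]exchange_big /=; apply: eq_bigr => j _.
rewrite !mxE mulr_sumr; apply: eq_bigr => l _; rewrite !mxE; ring.
Qed.

Unset Implicit Arguments. Set Strict Implicit. Set Printing Implicit Defensive.

Theorem mainTheorem2
  (R : realType) (d : measure_display) (T : measurableType d)
  (P : probability T R)
  (n a b Z m3 m4 : nat)
  (x : T -> 'cV[R]_n) (Psi L : 'M[R]_n)
  (K3 : 'M[R]_(m3, n)) (K4 : 'M[R]_(m4, n))
  (mu3 mu4 : seq R)
  (E13 E15 : 'M[R]_(Z, a)) (E24 E25 : 'M[R]_(Z, b))
  (E56 : 'M[R]_(Z, Z + Z)) (D3 D4 : 'M[R]_(n, Z + Z)) :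
  (0 < n)%N -> (0 < a)%N -> (0 < b)%N -> (0 < Z)%N ->
  (maxn a b <= n)%N -> (n <= a + b)%N -> (Z <= n)%N ->
  (forall i : 'I_n, measurable_fun setT (fun t => x t i 0)) ->
  (forall i : 'I_n, P.-integrable setT (fun t => (x t i 0)%:E)) ->
  (forall i : 'I_n, P.-integrable setT (fun t => (x t i 0 ^+ 2)%:E)) ->
  (forall i : 'I_n, (\int[P]_t (x t i 0)%:E = 0)%E) ->
  (forall i j : 'I_n, (\int[P]_t (x t i 0 * x t j 0)%:E = (Psi i j)%:E)%E) ->
  posdef Psi ->
  cholesky Psi L ->
  sorted_eigenvalues (L^T *m K3^T *m K3 *m L) mu3 ->
  sorted_eigenvalues (L^T *m K4^T *m K4 *m L) mu4 ->
  let x1 := fun t => @first_block R a n *m x t in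
  let x2 := fun t => @last_block R b n *m x t in
  let phi13 := fun t => E13 *m x1 t in
  let phi15 := fun t => E15 *m x1 t in
  let phi24 := fun t => E24 *m x2 t in
  let phi25 := fun t => E25 *m x2 t in
  let phi56 := fun t => E56 *m col_mx (phi15 t) (phi25 t) in
  let xhat3 := fun t => D3 *m col_mx (phi13 t) (phi56 t) in
  let xhat4 := fun t => D4 *m col_mx (phi24 t) (phi56 t) in
  let L_total :=
    (\int[P]_t (sqnorm (K3 *m x t - K3 *m xhat3 t))%:E
     + \int[P]_t (sqnorm (K4 *m x t - K4 *m xhat4 t))%:E)%E in
  let L_lb := \sum_(Z + Z <= j < n) (mu3`_j + mu4`_j) in
  (L_lb%:E <= L_total)%E.
Proof.
move=> n0 a0 b0 Z0 hab hn hZ mx ix ix2 ix0 hPsi pd [Ltri Ldiag PsiE] ev3 ev4.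
cbv zeta.
pose N56 := E56 *m col_mx (E15 *m first_block R a n) (E25 *m last_block R b n).
pose N3 := col_mx (E13 *m first_block R a n) N56.
pose N4 := col_mx (E24 *m last_block R b n) N56.
have xh3 : forall t, K3 *m x t - K3 *m (D3 *m col_mx (E13 *m (first_block R a n *m x t))
     (E56 *m col_mx (E15 *m (first_block R a n *m x t)) (E25 *m (last_block R b n *m x t))))
   = (K3 - K3 *m (D3 *m N3)) *m x t.
  move=> t; rewrite mulmxBl; congr (_ - _); rewrite /N3 /N56.
  by rewrite -!mulmxA !mul_col_mx -!mulmxA !mul_col_mx -!mulmxA.
have xh4 : forall t, K4 *m x t - K4 *m (D4 *m col_mx (E24 *m (last_block R b n *m x t))
     (E56 *m col_mx (E15 *m (first_block R a n *m x t)) (E25 *m (last_block R b n *m x t))))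
   = (K4 - K4 *m (D4 *m N4)) *m x t.
  move=> t; rewrite mulmxBl; congr (_ - _); rewrite /N4 /N56.
  by rewrite -!mulmxA !mul_col_mx -!mulmxA !mul_col_mx -!mulmxA.
under eq_integral do rewrite xh3.
under [X in (_ + X)%E]eq_integral do rewrite xh4.
rewrite !(expect_sq _ mx ix2 hPsi) PsiE !quad.
rewrite !mulmxBl -!mulmxA big_split /= -EFinD lee_fin.
case: ev3 => sz3 so3 ch3; case: ev4 => sz4 so4 ch4.
apply: lerD.
  rewrite !mulmxA -[K3 *m D3 *m N3 *m L]mulmxA; apply: LinAlg.partB_R => //.
  by rewrite trmx_mul !mulmxA.
rewrite !mulmxA -[K4 *m D4 *m N4 *m L]mulmxA; apply: LinAlg.partB_R => //.
by rewrite trmx_mul !mulmxA.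
Qed.
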